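(* Let $A$ be a commutative monoid which is a domain (if $A$ has no zero: $A$ is cancellative; if $A$ is a monoid with zero: $A\setminus\{0\}$ is a cancellative submonoid). Then every projective $A$-module is free.
   Context: If $A$ has no zero, an $A$-module is a set with a unital associative $A$-action; if $A$ has a zero, it is a pointed set with an action in which $0$ acts by sending everything to the base point, which is fixed. Free modules are coproducts (disjoint unions, resp. wedge sums) of copies of $A$. A module is projective if every surjection onto it has a section, equivalently if it is a retract of a free module. *)

(* Defs.v *)
From Stdlib Require Import ClassicalEpsilon.

Record cmonoid := CMonoid {
  mcarrier :> Type;
  mmul : mcarrier -> mcarrier -> mcarrier;
  mone : mcarrier;
  mmulA : forall a b c, mmul a (mmul b c) = mmul (mmul a b) c;
  mmulC : forall a b, mmul a b = mmul b a;
  mmul1 : forall a, mmul mone a = a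
}.

Definition cancellative (A : cmonoid) : Prop :=
  forall a b c : A, mmul A a b = mmul A a c -> b = c.

Record cmonoid0 := CMonoid0 {
  zcarrier :> Type;
  zmul : zcarrier -> zcarrier -> zcarrier;
  zone : zcarrier;
  zzero : zcarrier;
  zmulA : forall a b c, zmul a (zmul b c) = zmul (zmul a b) c;
  zmulC : forall a b, zmul a b = zmul b a;
  zmul1 : forall a, zmul zone a = a;
  zmul0 : forall a, zmul zzero a = zzero
}.

Definition domain0 (A : cmonoid0) : Prop :=
  zone A <> zzero A /\
  (forall a b : A, a <> zzero A -> b <> zzero A -> zmul A a b <> zzero A) /\
  (forall a b c : A, a <> zzero A -> b <> zzero A -> c <> zzero A ->
     zmul A a b = zmul A a c -> b = c).

(* ---------- Modules over a monoid without zero: A-sets ---------- *)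
Record mset (A : cmonoid) := MSet {
  scarrier :> Type;
  sact : A -> scarrier -> scarrier;
  sact1 : forall x, sact (mone A) x = x;
  sactM : forall a b x, sact (mmul A a b) x = sact a (sact b x)
}.
Arguments sact {A} _ _ _.

Definition equivariant {A : cmonoid} (X Y : mset A) (f : X -> Y) : Prop :=
  forall a x, f (sact X a x) = sact Y a (f x).

Definition projective {A : cmonoid} (X : mset A) : Prop :=
  forall (Y : mset A) (p : Y -> X), equivariant Y X p ->
    (forall x : X, exists y : Y, p y = x) ->
    exists s : X -> Y, equivariant X Y s /\ forall x, p (s x) = x.

(* Free module on I: the disjoint union of I copies of A, i.e. I * A with
   a . (i, b) = (i, a b).  X is free if it is isomorphic to such a module. *)
Definition free_act (A : cmonoid) (I : Type) (a : A) (p : I * A) : I * A :=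
  (fst p, mmul A a (snd p)).

Definition free {A : cmonoid} (X : mset A) : Prop :=
  exists (I : Type) (f : X -> I * A) (g : I * A -> X),
    (forall x, g (f x) = x) /\ (forall p, f (g p) = p) /\
    (forall a x, f (sact X a x) = free_act A I a (f x)) /\
    (forall a p, g (free_act A I a p) = sact X a (g p)).

(* ---------- Modules over a monoid with zero: pointed A-sets ---------- *)
Record pmset (A : cmonoid0) := PMSet {
  pcarrier :> Type;
  pact : A -> pcarrier -> pcarrier;
  pbase : pcarrier;
  pact1 : forall x, pact (zone A) x = x;
  pactM : forall a b x, pact (zmul A a b) x = pact a (pact b x);
  pact0 : forall x, pact (zzero A) x = pbase;
  pactb : forall a, pact a pbase = pbase
}.
Arguments pact {A} _ _ _.
Arguments pbase {A} _.

Definition pequivariant {A : cmonoid0} (X Y : pmset A) (f : X -> Y) : Prop :=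
  f (pbase X) = pbase Y /\ forall a x, f (pact X a x) = pact Y a (f x).

Definition pprojective {A : cmonoid0} (X : pmset A) : Prop :=
  forall (Y : pmset A) (p : Y -> X), pequivariant Y X p ->
    (forall x : X, exists y : Y, p y = x) ->
    exists s : X -> Y, pequivariant X Y s /\ forall x, p (s x) = x.

(* Free pointed module on I: the wedge sum of I copies of A, with carrier
   option (I * (A \ {0})): None is the base point, Some (i, b) is b in the
   i-th copy; a . (i, b) = (i, a b) if a b <> 0 and the base point otherwise. *)
Definition nz (A : cmonoid0) := { a : A | a <> zzero A }.

Definition pfree_act (A : cmonoid0) (I : Type) (a : A)
    (p : option (I * nz A)) : option (I * nz A) :=
  match p with
  | None => None
  | Some (i, b) =>
      match excluded_middle_informative (zmul A a (proj1_sig b) = zzero A) with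
      | left _ => None
      | right h => Some (i, exist _ (zmul A a (proj1_sig b)) h)
      end
  end.

Definition pfree {A : cmonoid0} (X : pmset A) : Prop :=
  exists (I : Type) (f : X -> option (I * nz A)) (g : option (I * nz A) -> X),
    (forall x, g (f x) = x) /\ (forall p, f (g p) = p) /\
    f (pbase X) = None /\ g None = pbase X /\
    (forall a x, f (pact X a x) = pfree_act A I a (f x)) /\
    (forall a p, g (pfree_act A I a p) = pact X a (g p)).

(* Main.v *)
Require Import Defs.
From Stdlib Require Import ClassicalEpsilon ProofIrrelevance.

Lemma sig_eq {T : Type} {P : T -> Prop} (u v : sig P) :
  proj1_sig u = proj1_sig v -> u = v.
Proof. destruct u, v; simpl; intros ->; f_equal; apply proof_irrelevance. Qed.

Definition freeY (A : cmonoid) (X : Type) : mset A.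
Proof.
  refine (MSet A (X * A) (fun a p => (fst p, mmul A a (snd p))) _ _).
  - intros [x b]; simpl; now rewrite mmul1.
  - intros a b [x c]; simpl; now rewrite mmulA.
Defined.

Lemma mmul_1r (A : cmonoid) (b : A) : mmul A b (mone A) = b.
Proof. rewrite mmulC; apply mmul1. Qed.

Lemma part1 (A : cmonoid) (Hc : cancellative A) (X : mset A) (s : X -> X * A)
  (Hs : forall a x, s (sact X a x) = (fst (s x), mmul A a (snd (s x))))
  (Hp : forall x, sact X (snd (s x)) (fst (s x)) = x) : free X.
Proof.
  assert (key : forall x, s (fst (s x)) = (fst (s x), mone A)).
  { intro x. pose proof (Hp x) as E.
    remember (fst (s x)) as y. remember (snd (s x)) as b.
    assert (H : s x = s (sact X b y)) by (rewrite E; reflexivity).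
    rewrite Hs in H. rewrite (surjective_pairing (s x)) in H.
    rewrite <- Heqy, <- Heqb in H. injection H as H1 H2.
    rewrite (surjective_pairing (s y)). rewrite <- H1. f_equal.
    symmetry. apply (Hc b). rewrite mmul_1r. exact H2. }
  exists {y : X | s y = (y, mone A)}.
  exists (fun x => (exist _ (fst (s x)) (key x), snd (s x))).
  exists (fun q => sact X (snd q) (proj1_sig (fst q))).
  split; [|split; [|split]].
  - intro x; simpl; apply Hp.
  - intros [[y Hy] b]; simpl. apply injective_projections; simpl.
    + apply sig_eq; simpl. rewrite Hs, Hy; reflexivity.
    + rewrite Hs, Hy; simpl; apply mmul_1r.
  - intros a x; unfold free_act; simpl. apply injective_projections; simpl.
    + apply sig_eq; simpl; rewrite Hs; reflexivity.
    + rewrite Hs; reflexivity.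
  - intros a [i b]; unfold free_act; simpl; apply sactM.
Qed.

Lemma nz_eq (A : cmonoid0) (u v : nz A) : proj1_sig u = proj1_sig v -> u = v.
Proof. apply sig_eq. Qed.

Definition wedgeY (A : cmonoid0) (X : Type) : pmset A.
Proof.
  refine (PMSet A (option (X * nz A)) (pfree_act A X) None _ _ _ _).
  - intros [[x [b hb]]|]; [|reflexivity]. cbn.
    destruct (excluded_middle_informative _) as [e|n].
    + rewrite zmul1 in e; contradiction.
    + do 2 f_equal; apply nz_eq; simpl; apply zmul1.
  - intros a b [[x [c hc]]|]; [|reflexivity]. cbn.
    destruct (excluded_middle_informative (zmul A b c = zzero A)) as [e|n]; cbn.
    + destruct (excluded_middle_informative (zmul A (zmul A a b) c = zzero A)) as [e'|n'];
        [reflexivity|].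
      exfalso; apply n'. rewrite <- zmulA, e, zmulC, zmul0; reflexivity.
    + destruct (excluded_middle_informative (zmul A a (zmul A b c) = zzero A)) as [e|n2];
      destruct (excluded_middle_informative (zmul A (zmul A a b) c = zzero A)) as [e'|n'];
      try reflexivity.
      * exfalso; apply n'; rewrite <- zmulA; exact e.
      * exfalso; apply n2; rewrite zmulA; exact e'.
      * do 2 f_equal; apply nz_eq; simpl; symmetry; apply zmulA.
  - intros [[x [c hc]]|]; [|reflexivity]. cbn.
    destruct (excluded_middle_informative _) as [e|n]; [reflexivity|].
    exfalso; apply n; apply zmul0.
  - reflexivity.
Defined.

Definition one1 (A : cmonoid0) (Hd : domain0 A) : nz A :=
  exist _ (zone A) (proj1 Hd).

Definition ppmap {A : cmonoid0} (X : pmset A) (q : option (X * nz A)) : X :=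
  match q with None => pbase X | Some (y, b) => pact X (proj1_sig b) y end.

Definition Iset (A : cmonoid0) (Hd : domain0 A) (X : pmset A)
  (s : X -> option (X * nz A)) := {y : X | s y = Some (y, one1 A Hd)}.

Definition fmap (A : cmonoid0) (Hd : domain0 A) (X : pmset A)
  (s : X -> option (X * nz A)) (x : X) : option (Iset A Hd X s * nz A) :=
  match excluded_middle_informative
          (exists q : Iset A Hd X s * nz A, s x = Some (proj1_sig (fst q), snd q)) with
  | left h => Some (proj1_sig (constructive_indefinite_description _ h))
  | right _ => None
  end.

Lemma fspec1 A Hd X s x (q : Iset A Hd X s * nz A) :
  s x = Some (proj1_sig (fst q), snd q) -> fmap A Hd X s x = Some q.
Proof.
  intro H. unfold fmap. destruct (excluded_middle_informative _) as [h|n].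
  - destruct (constructive_indefinite_description _ h) as [q' Hq']; simpl.
    rewrite H in Hq'. injection Hq' as H1 H2. f_equal.
    destruct q, q'; simpl in *; f_equal; [apply sig_eq; auto | auto].
  - exfalso; apply n; exists q; auto.
Qed.

Lemma fspec0 A Hd X s x : s x = None -> fmap A Hd X s x = None.
Proof.
  intro H. unfold fmap. destruct (excluded_middle_informative _) as [h|];
    [exfalso; destruct h as [q Hq]; rewrite H in Hq; discriminate | reflexivity].
Qed.

Lemma zmul_1r (A : cmonoid0) (b : A) : zmul A b (zone A) = b.
Proof. rewrite zmulC; apply zmul1. Qed.

Lemma part2 (A : cmonoid0) (Hd : domain0 A) (X : pmset A)
  (s : X -> option (X * nz A))
  (S0 : s (pbase X) = None)
  (S1 : forall a x, s (pact X a x) = pfree_act A X a (s x))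
  (S2 : forall x, ppmap X (s x) = x) : pfree X.
Proof.
  assert (key : forall x y b, s x = Some (y, b) -> s y = Some (y, one1 A Hd)).
  { intros x y b H. pose proof (S2 x) as E. rewrite H in E; simpl in E.
    subst x. rewrite S1 in H.
    destruct (s y) as [[y' c]|] eqn:Ey; simpl in H; [|discriminate].
    destruct (excluded_middle_informative _) as [e|n]; [discriminate|].
    injection H as -> Hb. do 2 f_equal. apply nz_eq; simpl.
    destruct b as [b hb], c as [c hc]; simpl in *.
    apply (f_equal (@proj1_sig _ _)) in Hb; simpl in Hb.
    destruct Hd as [H1 [H2 H3]]. apply (H3 b); auto.
    rewrite zmul_1r; auto. }
  exists (Iset A Hd X s), (fmap A Hd X s).
  exists (fun p => match p with None => pbase X
                   | Some (i, b) => pact X (proj1_sig b) (proj1_sig i) end).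
  split; [|split; [|split; [|split; [|split]]]].
  - intro x. destruct (s x) as [[y b]|] eqn:E.
    + rewrite (fspec1 A Hd X s x (exist _ y (key _ _ _ E), b) E); simpl.
      pose proof (S2 x) as H; rewrite E in H; exact H.
    + rewrite fspec0 by exact E. pose proof (S2 x) as H; rewrite E in H; exact H.
  - intros [[[y Hy] b]|].
    + apply fspec1; simpl. rewrite S1, Hy. cbn.
      destruct (excluded_middle_informative _) as [e|n].
      * exfalso. rewrite zmul_1r in e. destruct b; contradiction.
      * do 2 f_equal; apply nz_eq; simpl; apply zmul_1r.
    + apply fspec0; exact S0.
  - apply fspec0; exact S0.
  - reflexivity.
  - intros a x. destruct (s x) as [[y b]|] eqn:E.
    + rewrite (fspec1 A Hd X s x (exist _ y (key _ _ _ E), b) E).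
      assert (H : s (pact X a x) = pfree_act A X a (Some (y, b))) by (rewrite S1, E; reflexivity).
      unfold pfree_act in H |- *.
      destruct (excluded_middle_informative _) as [e|n].
      * apply fspec0; exact H.
      * apply fspec1; exact H.
    + pose proof (S2 x) as H; rewrite E in H; simpl in H. subst x.
      rewrite pactb. rewrite fspec0 by exact S0. reflexivity.
  - intros a [[[y Hy] b]|]; simpl.
    + unfold pfree_act. destruct (excluded_middle_informative _) as [e|n]; simpl.
      * rewrite <- pactM, e, pact0; reflexivity.
      * apply pactM.
    + symmetry; apply pactb.
Qed.

Theorem mainTheorem4 :
  (forall (A : cmonoid), cancellative A ->
     forall X : mset A, projective X -> free X) /\
  (forall (A : cmonoid0), domain0 A ->
     forall X : pmset A, pprojective X -> pfree X).
Proof.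
  split.
  - intros A Hc X HP.
    destruct (HP (freeY A X) (fun y => sact X (snd y) (fst y))) as [s [Hs Hps]].
    + intros a [x b]; simpl; apply sactM.
    + intro x; exists (x, mone A); simpl; apply sact1.
    + apply (part1 A Hc X s); [exact Hs | exact Hps].
  - intros A Hd X HP.
    destruct (HP (wedgeY A X) (ppmap X)) as [s [[S0 S1] S2]].
    + split; [reflexivity|].
      intros a [[y [b hb]]|]; simpl; [|symmetry; apply pactb].
      unfold pfree_act; destruct (excluded_middle_informative _) as [e|n]; simpl.
      * rewrite <- pactM, e, pact0; reflexivity.
      * apply pactM.
    + intro x; exists (Some (x, one1 A Hd)); simpl; apply pact1.
    + apply (part2 A Hd X s); assumption.
Qed.
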